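(* Let $(\mathcal{C},\psi)$ be a t-pair and $j\in\{1,\dots,7\}$. Then $\operatorname{typ}_u(\mathcal{C},\psi)=t_j$ if and only if $\operatorname{typ}(\mathcal{C},\psi)=T_j$.
   Context: Let $\mathbb{N}=\{0,1,2,\dots\}$; for an integer $k\ge 2$ let $E_k=\{0,1,\dots,k-1\}$; let $\mathcal{P}(\mathbb{N})$ be the set of nonempty finite subsets of $\mathbb{N}$. Let $F$ be a nonempty set (of attribute names). A decision table $T\in\mathcal{M}_k(F)$ is a rectangular table with $n\ge 1$ columns labeled with attributes $f_1,\dots,f_n\in F$ (any two columns labeled with the same attribute are equal), whose rows are pairwise different tuples from $E_k^n$ (the set of rows may be empty), each row being labeled with a set of decisions from $\mathcal{P}(\mathbb{N})$. Write $At(T)=\{f_1,\dots,f_n\}$ and $\Delta(T)$ for the set of rows. For a word $\alpha=(f_{i_1},\delta_1)\cdots(f_{i_m},\delta_m)$ with $f_{i_j}\in At(T)$, $\delta_j\in E_k$, the subtable $T\alpha$ consists of the rows of $T$ having value $\delta_j$ in column $f_{i_j}$ for all $j$ ($T\lambda=T$ for the empty word $\lambda$). Operations on tables: (1) removal of a column from a table with at least two columns (if groups of equal rows appear, only the first row of each group, with its decision set, is kept); (2) changing of decisions: the decision sets attached to rows are replaced arbitrarily by sets from $\mathcal{P}(\mathbb{N})$; (3) permutation of columns: swap two columns together with their attribute labels; (4) duplication of columns: add a copy of a column (with its label) next to it. A set $\mathcal{C}\subseteq\mathcal{M}_k(F)$ is a closed class if every table obtained from a table of $\mathcal{C}$ by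 finitely many such operations belongs to $\mathcal{C}$. A decision tree over $\mathcal{M}_k(F)$ is a finite directed tree with a root (unique node with no entering edge) and at least two nodes such that the root and the edges leaving the root are unlabeled, each worker node (neither root nor terminal) is labeled with an attribute from $F$, each edge leaving a worker node is labeled with a number from $E_k$, and each terminal node is labeled with a number from $\mathbb{N}$. For a complete path $\xi$ (root to terminal node) whose worker nodes are labeled $f_{j_1},\dots,f_{j_m}$ in order, with the edges leaving them labeled $\delta_1,\dots,\delta_m$, put $\pi(\xi)=(f_{j_1},\delta_1)\cdots(f_{j_m},\delta_m)$, $\varphi(\xi)=f_{j_1}\cdots f_{j_m}$ (both empty if $m=0$), and let $\tau(\xi)$ be the label of its terminal node. A nondeterministic decision tree for $T$ is a decision tree $\Gamma$ whose worker-node attributes lie in $At(T)$, such that $\bigcup_{\xi}\Delta(T\pi(\xi))=\Delta(T)$ (union over complete paths), and for every row $r\in\Delta(T)$ and every complete path $\xi$ with $r\in\Delta(T\pi(\xi))$, $\tau(\xi)$ belongs to the decision set of $r$. A decision tree is deterministic if exactly one edge leaves the root and the edges leaving each worker node have pairwise different labels; a deterministic decision tree for $T$ is a deterministic decision tree that is a nondeterministic decision tree for $T$. A complexity measure over $\mathcal{M}_k(F)$ is any map $\psi:F^*\to\mathbb{N}$, where $F^*$ is the set of finite words over $F$ including the empty word $\lambda$. For a tree, $\psi(\Gamma)=\max_\xi\psi(\varphi(\xi))$ over complete paths. For $T$ with columns labeled $f_1,\dots,f_n$: $\psi^i(T)=\psi(f_1\cdots f_n)$, $\psi^d(T)$ is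 the minimum complexity of a deterministic decision tree for $T$, $\psi^a(T)$ the minimum complexity of a nondeterministic decision tree for $T$. A t-pair $(\mathcal{C},\psi)$ consists of a closed class $\mathcal{C}\subseteq\mathcal{M}_k(F)$ and a complexity measure $\psi$ over $\mathcal{M}_k(F)$. For $b,c\in\{i,d,a\}$ define partial functions $\mathcal{U}^{bc}_{\mathcal{C}\psi}(n)=\max\{\psi^b(T):T\in\mathcal{C},\psi^c(T)\le n\}$ (defined iff this set is nonempty and finite) and $\mathcal{L}^{bc}_{\mathcal{C}\psi}(n)=\min\{\psi^b(T):T\in\mathcal{C},\psi^c(T)\ge n\}$ (defined iff this set is nonempty). For a partial function $g:\mathbb{N}\to\mathbb{N}$ with domain $\mathrm{Dom}(g)$, let $\mathrm{Dom}^+(g)=\{n\in\mathrm{Dom}(g):g(n)\ge n\}$, $\mathrm{Dom}^-(g)=\{n\in\mathrm{Dom}(g):g(n)\le n\}$. Its type $\operatorname{typ}(g)$ is: $\alpha$ if $\mathrm{Dom}(g)$ is infinite and $g$ is bounded above; $\beta$ if $\mathrm{Dom}(g)$ is infinite, $\mathrm{Dom}^+(g)$ is finite and $g$ is unbounded above; $\gamma$ if $\mathrm{Dom}^+(g)$ and $\mathrm{Dom}^-(g)$ are both infinite; $\delta$ if $\mathrm{Dom}(g)$ is infinite and $\mathrm{Dom}^-(g)$ is finite; $\epsilon$ if $\mathrm{Dom}(g)$ is finite. The upper type $\operatorname{typ}_u(\mathcal{C},\psi)$ is the $3\times3$ table with rows and columns indexed by $i,d,a$ (in this order) with entry $\operatorname{typ}(\mathcal{U}^{bc}_{\mathcal{C}\psi})$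 in row $b$, column $c$; the type $\operatorname{typ}(\mathcal{C},\psi)$ is the analogous table with entry the pair $\operatorname{typ}(\mathcal{L}^{bc}_{\mathcal{C}\psi})\operatorname{typ}(\mathcal{U}^{bc}_{\mathcal{C}\psi})$. Row by row (rows $i,d,a$; entries in columns $i,d,a$): $t_1$: all entries $\alpha$. $t_2$: $(\gamma,\epsilon,\epsilon)$; $(\alpha,\alpha,\alpha)$; $(\alpha,\alpha,\alpha)$. $t_3$: $(\gamma,\epsilon,\epsilon)$; $(\beta,\gamma,\epsilon)$; $(\alpha,\alpha,\alpha)$. $t_4$: $(\gamma,\epsilon,\epsilon)$; $(\gamma,\gamma,\epsilon)$; $(\alpha,\alpha,\alpha)$. $t_5$: $(\gamma,\epsilon,\epsilon)$; $(\gamma,\gamma,\gamma)$; $(\gamma,\gamma,\gamma)$. $t_6$: $(\gamma,\epsilon,\epsilon)$; $(\gamma,\gamma,\delta)$; $(\gamma,\gamma,\gamma)$. $t_7$: $(\gamma,\epsilon,\epsilon)$; $(\gamma,\gamma,\epsilon)$; $(\gamma,\gamma,\gamma)$. $T_1$: all entries $\epsilon\alpha$. $T_2$: $(\gamma\gamma,\epsilon\epsilon,\epsilon\epsilon)$; $(\alpha\alpha,\epsilon\alpha,\epsilon\alpha)$; $(\alpha\alpha,\epsilon\alpha,\epsilon\alpha)$. $T_3$: $(\gamma\gamma,\delta\epsilon,\epsilon\epsilon)$; $(\alpha\beta,\gamma\gamma,\epsilon\epsilon)$; $(\alpha\alpha,\alpha\alpha,\epsilon\alpha)$. $T_4$: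 $(\gamma\gamma,\gamma\epsilon,\epsilon\epsilon)$; $(\alpha\gamma,\gamma\gamma,\epsilon\epsilon)$; $(\alpha\alpha,\alpha\alpha,\epsilon\alpha)$. $T_5$: $(\gamma\gamma,\gamma\epsilon,\gamma\epsilon)$; $(\alpha\gamma,\gamma\gamma,\gamma\gamma)$; $(\alpha\gamma,\gamma\gamma,\gamma\gamma)$. $T_6$: $(\gamma\gamma,\gamma\epsilon,\gamma\epsilon)$; $(\alpha\gamma,\gamma\gamma,\gamma\delta)$; $(\alpha\gamma,\beta\gamma,\gamma\gamma)$. $T_7$: $(\gamma\gamma,\gamma\epsilon,\gamma\epsilon)$; $(\alpha\gamma,\gamma\gamma,\gamma\epsilon)$; $(\alpha\gamma,\alpha\gamma,\gamma\gamma)$. *)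

(* Defs.v *)
From Stdlib Require Import List Arith PeanoNat ClassicalEpsilon.
Import ListNotations.
Set Implicit Arguments.

Section Tables.
Variable F : Type.

(* A decision table: the list of column labels f_1..f_n and the (ordered)
   list of rows; a row is its tuple of values together with its decision
   set (a nonempty finite subset of N, given as a list). *)
Record table := mkTable { attrs : list F ; rows : list (list nat * list nat) }.

Definition wf_table (k : nat) (T : table) : Prop :=
  attrs T <> [] /\
  (forall r, In r (rows T) ->
     length (fst r) = length (attrs T) /\ (forall x, In x (fst r) -> x < k)
     /\ snd r <> []) /\
  NoDup (map fst (rows T)) /\
  (forall i j f, nth_error (attrs T) i = Some f -> nth_error (attrs T) j = Some f ->
     forall r, In r (rows T) -> nth_error (fst r) i = nth_error (fst r) j).

Definition remove_at {A} (i : nat) (l : list A) : list A :=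
  firstn i l ++ skipn (S i) l.

Fixpoint replace_at {A} (i : nat) (x : A) (l : list A) : list A :=
  match l, i with
  | [], _ => []
  | _ :: t, 0 => x :: t
  | y :: t, S i' => y :: replace_at i' x t
  end.

Definition swap_at {A} (i j : nat) (l : list A) : list A :=
  match nth_error l i, nth_error l j with
  | Some a, Some b => replace_at i b (replace_at j a l)
  | _, _ => l
  end.

Definition dup_at {A} (i : nat) (l : list A) : list A :=
  match nth_error l i with
  | Some a => firstn (S i) l ++ a :: skipn (S i) l
  | None => l
  end.

Fixpoint keep_first (seen : list (list nat)) (l : list (list nat * list nat))
  : list (list nat * list nat) :=
  match l with
  | [] => []
  | r :: t =>
      if in_dec (list_eq_dec Nat.eq_dec) (fst r) seen then keep_first seen t
      else r :: keep_first (fst r :: seen) t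
  end.

Inductive op_step (k : nat) : table -> table -> Prop :=
  | op_remove T i :
      2 <= length (attrs T) -> i < length (attrs T) ->
      op_step k T (mkTable (remove_at i (attrs T))
                     (keep_first [] (map (fun r => (remove_at i (fst r), snd r)) (rows T))))
  | op_change T T' :
      attrs T' = attrs T -> map fst (rows T') = map fst (rows T) -> wf_table k T' ->
      op_step k T T'
  | op_swap T i j :
      i < length (attrs T) -> j < length (attrs T) ->
      op_step k T (mkTable (swap_at i j (attrs T))
                     (map (fun r => (swap_at i j (fst r), snd r)) (rows T)))
  | op_dup T i :
      i < length (attrs T) ->
      op_step k T (mkTable (dup_at i (attrs T))
                     (map (fun r => (dup_at i (fst r), snd r)) (rows T))).

Definition closed_class (k : nat) (C : table -> Prop) : Prop :=
  (forall T, C T -> wf_table k T) /\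
  (forall T T', C T -> op_step k T T' -> C T').

Definition row_in_sub (T : table) (alpha : list (F * nat)) (r : list nat * list nat) : Prop :=
  In r (rows T) /\
  forall f d, In (f, d) alpha ->
    exists i, nth_error (attrs T) i = Some f /\ nth_error (fst r) i = Some d.

(* A non-root node: a terminal node labelled by a number, or a worker node
   labelled by an attribute with its outgoing edges (edge label, child). *)
Inductive node : Type :=
  | Term : nat -> node
  | Work : F -> list (nat * node) -> node.

(* the tree is given by the (nonempty) list of children of its unlabelled root *)
Definition dtree := list node.

Inductive node_wf (k : nat) (P : F -> Prop) (det : bool) : node -> Prop :=
  | wf_term d : node_wf k P det (Term d)
  | wf_work f ch :
      P f -> ch <> [] ->
      (forall e, In e ch -> fst e < k /\ node_wf k P det (snd e)) ->
      (det = true -> NoDup (map fst ch)) ->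
      node_wf k P det (Work f ch).

(* complete paths below a node: the word pi(xi) and the terminal label tau(xi) *)
Fixpoint paths (x : node) : list (list (F * nat) * nat) :=
  match x with
  | Term d => [([], d)]
  | Work f ch =>
      (fix go (l : list (nat * node)) : list (list (F * nat) * nat) :=
         match l with
         | [] => []
         | (d, c) :: l' => map (fun p => ((f, d) :: fst p, snd p)) (paths c) ++ go l'
         end) ch
  end.

Definition tree_paths (G : dtree) : list (list (F * nat) * nat) := flat_map paths G.

Definition tree_cost (psi : list F -> nat) (G : dtree) : nat :=
  fold_right Nat.max 0 (map (fun p => psi (map fst (fst p))) (tree_paths G)).

(* Gamma is a nondeterministic (det = false) / deterministic (det = true)
   decision tree for T *)
Definition tree_for (k : nat) (det : bool) (T : table) (G : dtree) : Prop :=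
  G <> [] /\
  (det = true -> length G = 1) /\
  (forall x, In x G -> node_wf k (fun f => In f (attrs T)) det x) /\
  (forall r, In r (rows T) -> exists p, In p (tree_paths G) /\ row_in_sub T (fst p) r) /\
  (forall r p, In r (rows T) -> In p (tree_paths G) -> row_in_sub T (fst p) r ->
     In (snd p) (snd r)).

Inductive tag := ti | td | ta.

(* psi_val k psi b T v  :<->  psi^b(T) = v *)
Definition psi_val (k : nat) (psi : list F -> nat) (b : tag) (T : table) (v : nat) : Prop :=
  match b with
  | ti => v = psi (attrs T)
  | td => (exists G, tree_for k true T G /\ tree_cost psi G = v) /\
          (forall G, tree_for k true T G -> v <= tree_cost psi G)
  | ta => (exists G, tree_for k false T G /\ tree_cost psi G = v) /\
          (forall G, tree_for k false T G -> v <= tree_cost psi G)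
  end.

(* partial functions N -> N are given by their graphs *)
Definition upper_set k C psi b c n v : Prop :=
  exists T, C T /\ psi_val k psi b T v /\ exists w, psi_val k psi c T w /\ w <= n.
Definition lower_set k C psi b c n v : Prop :=
  exists T, C T /\ psi_val k psi b T v /\ exists w, psi_val k psi c T w /\ n <= w.

Definition U_fun k C psi b c (n m : nat) : Prop :=
  upper_set k C psi b c n m /\ forall v, upper_set k C psi b c n v -> v <= m.
Definition L_fun k C psi b c (n m : nat) : Prop :=
  lower_set k C psi b c n m /\ forall v, lower_set k C psi b c n v -> m <= v.

End Tables.

Inductive ty := ty_alpha | ty_beta | ty_gamma | ty_delta | ty_eps.

Definition infinite_set (P : nat -> Prop) : Prop := forall N, exists n, N <= n /\ P n.

Definition Dom (g : nat -> nat -> Prop) (n : nat) : Prop := exists m, g n m.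
Definition DomPlus (g : nat -> nat -> Prop) (n : nat) : Prop := exists m, g n m /\ n <= m.
Definition DomMinus (g : nat -> nat -> Prop) (n : nat) : Prop := exists m, g n m /\ m <= n.
Definition bounded_above (g : nat -> nat -> Prop) : Prop :=
  exists B, forall n m, g n m -> m <= B.

Definition is_alpha g := infinite_set (Dom g) /\ bounded_above g.
Definition is_beta g := infinite_set (Dom g) /\ ~ infinite_set (DomPlus g) /\ ~ bounded_above g.
Definition is_gamma g := infinite_set (DomPlus g) /\ infinite_set (DomMinus g).
Definition is_delta g := infinite_set (Dom g) /\ ~ infinite_set (DomMinus g).
Definition is_eps g := ~ infinite_set (Dom g).

(* typ(g), following the order of the definition *)
Definition typ (g : nat -> nat -> Prop) : ty :=
  if excluded_middle_informative (is_alpha g) then ty_alpha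
  else if excluded_middle_informative (is_beta g) then ty_beta
  else if excluded_middle_informative (is_gamma g) then ty_gamma
  else if excluded_middle_informative (is_delta g) then ty_delta
  else ty_eps.

Definition typ_u {F} (k : nat) (C : table F -> Prop) (psi : list F -> nat) (b c : tag) : ty :=
  typ (U_fun k C psi b c).
Definition typ_full {F} (k : nat) (C : table F -> Prop) (psi : list F -> nat) (b c : tag)
  : ty * ty :=
  (typ (L_fun k C psi b c), typ (U_fun k C psi b c)).

(* ---- the tables t_1..t_7 and T_1..T_7 (rows b, columns c) ---- *)
Definition sel {A} (c : tag) (x y z : A) : A :=
  match c with ti => x | td => y | ta => z end.

Notation al := ty_alpha. Notation be := ty_beta. Notation ga := ty_gamma.
Notation de := ty_delta. Notation ep := ty_eps.

Definition t_tab (j : nat) (b c : tag) : ty :=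
  match j with
  | 1 => al
  | 2 => sel b (sel c ga ep ep) (sel c al al al) (sel c al al al)
  | 3 => sel b (sel c ga ep ep) (sel c be ga ep) (sel c al al al)
  | 4 => sel b (sel c ga ep ep) (sel c ga ga ep) (sel c al al al)
  | 5 => sel b (sel c ga ep ep) (sel c ga ga ga) (sel c ga ga ga)
  | 6 => sel b (sel c ga ep ep) (sel c ga ga de) (sel c ga ga ga)
  | 7 => sel b (sel c ga ep ep) (sel c ga ga ep) (sel c ga ga ga)
  | _ => al
  end.

Definition T_tab (j : nat) (b c : tag) : ty * ty :=
  match j with
  | 1 => (ep, al)
  | 2 => sel b (sel c (ga, ga) (ep, ep) (ep, ep))
               (sel c (al, al) (ep, al) (ep, al))
               (sel c (al, al) (ep, al) (ep, al))
  | 3 => sel b (sel c (ga, ga) (de, ep) (ep, ep))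
               (sel c (al, be) (ga, ga) (ep, ep))
               (sel c (al, al) (al, al) (ep, al))
  | 4 => sel b (sel c (ga, ga) (ga, ep) (ep, ep))
               (sel c (al, ga) (ga, ga) (ep, ep))
               (sel c (al, al) (al, al) (ep, al))
  | 5 => sel b (sel c (ga, ga) (ga, ep) (ga, ep))
               (sel c (al, ga) (ga, ga) (ga, ga))
               (sel c (al, ga) (ga, ga) (ga, ga))
  | 6 => sel b (sel c (ga, ga) (ga, ep) (ga, ep))
               (sel c (al, ga) (ga, ga) (ga, de))
               (sel c (al, ga) (be, ga) (ga, ga))
  | 7 => sel b (sel c (ga, ga) (ga, ep) (ga, ep))
               (sel c (al, ga) (ga, ga) (ga, ep))
               (sel c (al, ga) (al, ga) (ga, ga))
  | _ => (ep, al)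
  end.

(* Main.v *)
Require Import Defs.
From Stdlib Require Import List Arith PeanoNat Lia Classical ClassicalEpsilon
  FunctionalExtensionality PropExtensionality.
Import ListNotations.

Section Conc.
Variable F : Type.
Variable k : nat.
Hypothesis hk : 1 <= k.

Lemma paths_work (f : F) ch p : In p (paths (Work f ch)) <->
  exists d c q, In (d, c) ch /\ In q (paths c) /\ p = ((f, d) :: fst q, snd q).
Proof.
  induction ch as [|[d c] ch IH]; simpl.
  - split; [contradiction| intros (?&?&?&[]&_)].
  - rewrite in_app_iff, in_map_iff. simpl in IH. rewrite IH. split.
    + intros [[q [Hq1 Hq2]]|(d'&c'&q&H1&H2&H3)].
      * exists d, c, q. auto.
      * exists d', c', q. auto.
    + intros (d'&c'&q&[H1|H1]&H2&H3).
      * inversion H1; subst. left. exists q. auto.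
      * right. exists d', c', q. auto.
Qed.

Definition lookup (pre : list nat) (rs : list (list nat * list nat)) : nat :=
  match find (fun r => if list_eq_dec Nat.eq_dec (fst r) pre then true else false) rs with
  | Some r => hd 0 (snd r) | None => 0 end.

Fixpoint full (rs : list (list nat * list nat)) (l : list F) (pre : list nat) : node F :=
  match l with
  | [] => Term F (lookup pre rs)
  | f :: l' => Work f (map (fun d => (d, full rs l' (pre ++ [d]))) (seq 0 k))
  end.

Lemma full_paths rs l pre p : In p (paths (full rs l pre)) ->
  exists vs, length vs = length l /\ p = (combine l vs, lookup (pre ++ vs) rs).
Proof.
  revert pre p. induction l as [|f l IH]; intros pre p Hp.
  - simpl in Hp. destruct Hp as [<-|[]]. exists []. rewrite app_nil_r. auto.
  - simpl full in Hp. apply paths_work in Hp. destruct Hp as (d&c&q&H1&H2&H3).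
    apply in_map_iff in H1. destruct H1 as [d' [H1 _]]. inversion H1; subst.
    destruct (IH _ _ H2) as [vs [Hl Hq]]. exists (d :: vs). split. simpl; auto.
    rewrite Hq. simpl. rewrite <- app_assoc. reflexivity.
Qed.

Lemma full_paths_in rs l pre vs : length vs = length l -> (forall x, In x vs -> x < k) ->
  In (combine l vs, lookup (pre ++ vs) rs) (paths (full rs l pre)).
Proof.
  revert pre vs. induction l as [|f l IH]; intros pre vs Hl Hk.
  - destruct vs; [|discriminate]. rewrite app_nil_r. simpl. auto.
  - destruct vs as [|v vs]; [discriminate|]. simpl full. apply paths_work.
    exists v, (full rs l (pre ++ [v])), (combine l vs, lookup ((pre ++ [v]) ++ vs) rs).
    split; [|split].
    + apply in_map_iff. exists v. split; auto. apply in_seq. 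
      assert (v < k) by (apply Hk; simpl; auto). lia.
    + apply IH. simpl in Hl; lia. intros; apply Hk; simpl; auto.
    + simpl. rewrite <- app_assoc. reflexivity.
Qed.

Lemma full_wf rs (Q : F -> Prop) l pre : (forall f, In f l -> Q f) -> node_wf k Q true (full rs l pre).
Proof.
  revert pre. induction l as [|f l IH]; intros pre HQ; simpl.
  - constructor.
  - constructor.
    + apply HQ; simpl; auto.
    + destruct k; [lia|]. simpl. discriminate.
    + intros e He. apply in_map_iff in He. destruct He as [d [<- Hd]]. simpl.
      apply in_seq in Hd. split; [lia|]. apply IH. intros; apply HQ; simpl; auto.
    + intros _. rewrite map_map. simpl. rewrite map_id. apply seq_NoDup.
Qed.

Lemma in_combine_nth {A B} (l1 : list A) (l2 : list B) a b : In (a, b) (combine l1 l2) ->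
  exists i, nth_error l1 i = Some a /\ nth_error l2 i = Some b.
Proof.
  revert l2. induction l1 as [|x l1 IH]; intros [|y l2] H; simpl in H; try contradiction.
  destruct H as [H|H].
  - inversion H; subst. exists 0. auto.
  - destruct (IH _ H) as [i Hi]. exists (S i). auto.
Qed.

Lemma nth_in_combine {A B} (l1 : list A) (l2 : list B) i a b :
  nth_error l1 i = Some a -> nth_error l2 i = Some b -> In (a, b) (combine l1 l2).
Proof.
  revert l2 i. induction l1 as [|x l1 IH]; intros [|y l2] [|i] H1 H2; simpl in *;
    try discriminate.
  - inversion H1; inversion H2; subst; auto.
  - right. eapply IH; eauto.
Qed.

Lemma nodup_map_inj {A B} (f : A -> B) l x y : NoDup (map f l) -> In x l -> In y l -> f x = f y -> x = y.
Proof.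
  induction l as [|z l IH]; simpl; intros Hn Hx Hy He; [contradiction|].
  inversion Hn; subst. destruct Hx as [<-|Hx]; destruct Hy as [<-|Hy]; auto.
  - exfalso. apply H1. rewrite He. apply in_map; auto.
  - exfalso. apply H1. rewrite <- He. apply in_map; auto.
Qed.

Lemma full_tree (T : table F) : wf_table k T ->
  tree_for k true T [full (rows T) (attrs T) []].
Proof.
  intros (Hne & Hrows & Hnd & Hcol).
  split; [discriminate|]. split; [reflexivity|]. split; [|split].
  - intros x [<-|[]]. apply full_wf. auto.
  - intros r Hr. destruct (Hrows r Hr) as [Hl [Hk _]].
    exists (combine (attrs T) (fst r), lookup ([] ++ fst r) (rows T)).
    split. unfold tree_paths. simpl. rewrite app_nil_r. exact (full_paths_in (rows T) (attrs T) [] (fst r) ltac:(auto) Hk).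
    split; auto. intros f d Hfd. simpl in Hfd. apply in_combine_nth in Hfd. auto.
  - intros r p Hr Hp Hsub. unfold tree_paths in Hp. simpl in Hp. rewrite app_nil_r in Hp.
    apply full_paths in Hp. destruct Hp as [vs [Hl ->]]. simpl.
    destruct (Hrows r Hr) as [Hlr [_ Hdec]].
    assert (Hvs : vs = fst r).
    { apply nth_error_ext. intros n.
      destruct (lt_dec n (length (attrs T))) as [Hn|Hn].
      - destruct (nth_error (attrs T) n) as [a|] eqn:Ha;
          [|apply nth_error_None in Ha; lia].
        destruct (nth_error vs n) as [b|] eqn:Hb; [|apply nth_error_None in Hb; lia].
        destruct Hsub as [_ Hsub]. destruct (Hsub a b) as [i [Hi1 Hi2]].
        simpl. eapply nth_in_combine; eauto.
        rewrite <- (Hcol i n a Hi1 Ha r Hr). auto.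
      - rewrite (proj2 (nth_error_None vs n)) by lia.
        rewrite (proj2 (nth_error_None (fst r) n)) by lia. auto. }
    subst vs. unfold lookup. simpl.
    destruct (find _ (rows T)) as [r'|] eqn:Hf.
    + apply find_some in Hf. destruct Hf as [Hr' Heq].
      destruct (list_eq_dec Nat.eq_dec (fst r') (fst r)) as [He|]; [|discriminate].
      rewrite (nodup_map_inj _ _ _ _ Hnd Hr' Hr He).
      destruct (snd r); [congruence|]. simpl; auto.
    + exfalso. eapply find_none in Hf; [|exact Hr]. simpl in Hf.
      destruct (list_eq_dec Nat.eq_dec (fst r) (fst r)); [discriminate|congruence].
Qed.

Lemma map_fst_combine' {A B} (l1 : list A) (l2 : list B) : length l2 = length l1 ->
  map fst (combine l1 l2) = l1.
Proof.
  revert l2; induction l1; intros [|b l2] H; simpl in *; try discriminate; auto.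
  rewrite IHl1; auto.
Qed.

Lemma fold_max_le (l : list nat) c : (forall x, In x l -> x <= c) -> fold_right Nat.max 0 l <= c.
Proof.
  induction l; simpl; intros H. lia. apply Nat.max_lub. apply H; auto. apply IHl; auto.
Qed.

Lemma full_cost psi (T : table F) : tree_cost psi [full (rows T) (attrs T) []] <= psi (attrs T).
Proof.
  unfold tree_cost. apply fold_max_le. intros x Hx. apply in_map_iff in Hx.
  destruct Hx as [p [<- Hp]]. unfold tree_paths in Hp. simpl in Hp. rewrite app_nil_r in Hp.
  apply full_paths in Hp. destruct Hp as [vs [Hl ->]]. simpl.
  rewrite map_fst_combine' by lia. lia.
Qed.

Lemma wf_relax (P : F -> Prop) x : node_wf k P true x -> node_wf k P false x.
Proof.
  revert x. fix IH 2. intros x H. destruct H as [d| f ch Pf ne Hch Hnd].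
  - constructor.
  - apply wf_work; [exact Pf|exact ne| |].
    + intros e He. destruct (Hch e He) as [h1 h2]. split; [exact h1|exact (IH _ h2)].
    + discriminate.
Qed.

Lemma tree_relax (T : table F) G : tree_for k true T G -> tree_for k false T G.
Proof.
  intros (H1&H2&H3&H4&H5). split; [exact H1|]. split; [discriminate|].
  split; [|split; [exact H4|exact H5]].
  intros x Hx. apply wf_relax. auto.
Qed.

Lemma term_tree (T : table F) d : (forall r, In r (rows T) -> In d (snd r)) ->
  tree_for k true T [Term F d].
Proof.
  intros H. split; [discriminate|]. split; [reflexivity|]. split; [|split].
  - intros x [<-|[]]. constructor.
  - intros r Hr. exists ([], d). split. simpl; auto. split; auto. intros f d' [].
  - intros r p Hr [<-|[]] _. simpl. auto.
Qed.

End Conc.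
Lemma not_inf_iff (A : nat -> Prop) : ~ infinite_set A <-> exists N, forall n, N <= n -> ~ A n.
Proof.
  split.
  - intro H. apply NNPP. intro H'. apply H. intro N. apply NNPP. intro H2. apply H'.
    exists N. intros n Hn HA. apply H2. eauto.
  - intros [N HN] H. destruct (H N) as [n [Hn HA]]. exact (HN n Hn HA).
Qed.

Lemma inf_mono (A B : nat -> Prop) : (forall n, A n -> B n) -> infinite_set A -> infinite_set B.
Proof. intros H HA N. destruct (HA N) as [n [Hn HAn]]. eauto. Qed.

Lemma fin_mono (A B : nat -> Prop) : (forall n, A n -> B n) -> ~ infinite_set B -> ~ infinite_set A.
Proof. intros H HB HA. apply HB. eapply inf_mono; eauto. Qed.

Lemma alpha_minus g : is_alpha g -> infinite_set (DomMinus g).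
Proof.
  intros [HD [B HB]] N. destruct (HD (N + B)) as [n [Hn [m Hm]]].
  exists n. split; [lia|]. exists m. split; auto. specialize (HB _ _ Hm). lia.
Qed.

Lemma plus_unb g : infinite_set (DomPlus g) -> ~ bounded_above g.
Proof.
  intros H [B HB]. destruct (H (S B)) as [n [Hn [m [Hm Hnm]]]]. specialize (HB _ _ Hm). lia.
Qed.

Lemma plus_dom g : infinite_set (DomPlus g) -> infinite_set (Dom g).
Proof. apply inf_mono. intros n [m [Hm _]]. exists m; auto. Qed.

Lemma dom_split g : infinite_set (Dom g) -> ~ infinite_set (DomPlus g) -> infinite_set (DomMinus g).
Proof.
  intros HD Hp. apply not_inf_iff in Hp. destruct Hp as [N0 HN0]. intro N.
  destruct (HD (N + N0)) as [n [Hn [m Hm]]]. exists n. split; [lia|]. exists m. split; auto.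
  destruct (le_lt_dec m n); auto. exfalso. apply (HN0 n); [lia|]. exists m; split; auto; lia.
Qed.

Lemma typ_al g : is_alpha g -> typ g = ty_alpha.
Proof. unfold typ; intros H. destruct (excluded_middle_informative (is_alpha g)); tauto. Qed.

Lemma typ_be g : is_beta g -> typ g = ty_beta.
Proof.
  unfold typ; intros H. destruct (excluded_middle_informative (is_alpha g)) as [Ha|].
  - exfalso. destruct H as [_ [_ H]]. apply H. apply Ha.
  - destruct (excluded_middle_informative (is_beta g)); tauto.
Qed.

Lemma typ_ga g : is_gamma g -> typ g = ty_gamma.
Proof.
  unfold typ; intros H. destruct (excluded_middle_informative (is_alpha g)) as [Ha|].
  - exfalso. apply (plus_unb g (proj1 H)). apply Ha.
  - destruct (excluded_middle_informative (is_beta g)) as [Hb|].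
    + exfalso. apply (proj1 (proj2 Hb)). apply H.
    + destruct (excluded_middle_informative (is_gamma g)); tauto.
Qed.

Lemma typ_de g : is_delta g -> typ g = ty_delta.
Proof.
  unfold typ; intros H. destruct (excluded_middle_informative (is_alpha g)) as [Ha|].
  - exfalso. apply (proj2 H). apply alpha_minus; auto.
  - destruct (excluded_middle_informative (is_beta g)) as [Hb|].
    + exfalso. apply (proj2 H). apply dom_split; apply Hb.
    + destruct (excluded_middle_informative (is_gamma g)) as [Hc|].
      * exfalso. apply (proj2 H). apply Hc.
      * destruct (excluded_middle_informative (is_delta g)); tauto.
Qed.

Lemma typ_ep g : ~ infinite_set (Dom g) -> typ g = ty_eps.
Proof.
  unfold typ; intros H. destruct (excluded_middle_informative (is_alpha g)) as [Ha|].
  - exfalso. apply H, Ha.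
  - destruct (excluded_middle_informative (is_beta g)) as [Hb|].
    + exfalso. apply H, Hb.
    + destruct (excluded_middle_informative (is_gamma g)) as [Hc|].
      * exfalso. apply H, plus_dom, Hc.
      * destruct (excluded_middle_informative (is_delta g)) as [Hd|]; auto.
        exfalso. apply H, Hd.
Qed.

Lemma typ_al_inv g : typ g = ty_alpha -> is_alpha g.
Proof.
  unfold typ. destruct (excluded_middle_informative (is_alpha g)); auto.
  repeat destruct excluded_middle_informative; discriminate.
Qed.
Lemma typ_be_inv g : typ g = ty_beta -> is_beta g.
Proof. unfold typ. repeat destruct excluded_middle_informative; auto; discriminate. Qed.
Lemma typ_ga_inv g : typ g = ty_gamma -> is_gamma g.
Proof. unfold typ. repeat destruct excluded_middle_informative; auto; discriminate. Qed.
Lemma typ_de_inv g : typ g = ty_delta -> is_delta g.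
Proof. unfold typ. repeat destruct excluded_middle_informative; auto; discriminate. Qed.
Lemma typ_ep_inv g : typ g = ty_eps -> ~ infinite_set (Dom g).
Proof.
  unfold typ. repeat destruct excluded_middle_informative; try discriminate.
  intros _ HD. apply n0. split; [exact HD|]. split.
  - intro Hp. apply n1. split; auto. apply NNPP; intro Hm. apply n2. split; auto.
  - intro Hb. apply n. split; auto.
Qed.
Section Abs.
Variable X : Type.
Variable P : X -> Prop.

Definition UA (f g : X -> nat) (n m : nat) : Prop :=
  (exists x, P x /\ f x = m /\ g x <= n) /\ (forall x, P x -> g x <= n -> f x <= m).
Definition LA (f g : X -> nat) (n m : nat) : Prop :=
  (exists x, P x /\ f x = m /\ n <= g x) /\ (forall x, P x -> n <= g x -> m <= f x).

Lemma min_ex (S : nat -> Prop) n : S n -> exists m, S m /\ forall v, S v -> m <= v.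
Proof.
  induction n as [n IH] using lt_wf_ind. intros Hn.
  destruct (classic (exists v, v < n /\ S v)) as [[v [Hv Sv]]|Hno].
  - exact (IH v Hv Sv).
  - exists n. split; auto. intros v Sv. destruct (le_lt_dec n v); auto. exfalso; eauto.
Qed.

Lemma max_ex (S : nat -> Prop) B : (forall v, S v -> v <= B) -> (exists v, S v) ->
  exists m, S m /\ forall v, S v -> v <= m.
Proof.
  induction B; intros HB [v Hv].
  - assert (v = 0) by (pose proof (HB v Hv); lia). subst. exists 0. split; [auto|].
    intros w Hw; apply HB in Hw; lia.
  - destruct (classic (S (Datatypes.S B))) as [HS|HS].
    + exists (Datatypes.S B); split; auto.
    + apply IHB; [|eauto]. intros w Hw. pose proof (HB w Hw).
      destruct (Nat.eq_dec w (Datatypes.S B)); [subst; contradiction| lia].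
Qed.

Lemma LA_ex f g n : (exists x, P x /\ n <= g x) -> exists m, LA f g n m.
Proof.
  intros [x [Px Hx]].
  destruct (min_ex (fun v => exists y, P y /\ f y = v /\ n <= g y) (f x)) as [m [[y [Py [Hy1 Hy2]]] Hmin]].
  eauto. exists m. split. eauto. intros z Pz Hz. apply Hmin. eauto.
Qed.

Lemma UA_ex f g n : (exists x, P x /\ g x <= n) ->
  (exists B, forall x, P x -> g x <= n -> f x <= B) -> exists m, UA f g n m.
Proof.
  intros [x [Px Hx]] [B HB].
  destruct (max_ex (fun v => exists y, P y /\ f y = v /\ g y <= n) B) as [m [[y [Py [Hy1 Hy2]]] Hmax]].
  intros v [y [Py [<- Hy]]]; auto. eauto.
  exists m; split; [eauto|]. intros z Pz Hz; apply Hmax; eauto.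
Qed.

Lemma UA_bound_val f g : (forall x, P x -> f x <= g x) -> bounded_above (UA f g) ->
  exists B, forall x, P x -> f x <= B.
Proof.
  intros Hle [B HB]. exists B. intros x Px.
  destruct (UA_ex f g (g x)) as [m Hm]. eauto.
  exists (g x). intros y Py Hy. specialize (Hle y Py). lia.
  pose proof (HB _ _ Hm). destruct Hm as [_ Hm]. specialize (Hm x Px (le_n _)). lia.
Qed.

Lemma UA_plus_unb f g : infinite_set (DomPlus (UA f g)) -> forall N, exists x, P x /\ N <= f x.
Proof.
  intros H N. destruct (H N) as [n [Hn [m [[[x [Px [Hx _]]] _] Hnm]]]].
  exists x; split; auto; lia.
Qed.

Lemma UA_unb f g : ~ bounded_above (UA f g) -> forall N, exists x, P x /\ N <= f x.
Proof.
  intros H N. apply NNPP; intro Hc. apply H. exists N.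
  intros n m [[x [Px [<- _]]] _]. destruct (le_lt_dec (f x) N); auto.
  exfalso; apply Hc; exists x; split; auto; lia.
Qed.

Lemma LA_dom_all f g : (forall N, exists x, P x /\ N <= g x) -> infinite_set (Dom (LA f g)).
Proof. intros H N. exists N; split; auto. apply LA_ex; auto. Qed.

Lemma L_ep f g : (exists B, forall x, P x -> g x <= B) -> typ (LA f g) = ty_eps.
Proof.
  intros [B HB]. apply typ_ep. intro H.
  destruct (H (S B)) as [n [Hn [m [[x [Px [_ Hx]]] _]]]]. specialize (HB x Px). lia.
Qed.

Lemma L_ep_diag f g : typ (UA g g) = ty_alpha -> typ (LA f g) = ty_eps.
Proof.
  intro H. apply typ_al_inv in H. destruct H as [_ Hb]. apply L_ep.
  apply (UA_bound_val g g); auto.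
Qed.

Lemma R1_ga g : typ (UA g g) = ty_gamma -> typ (LA g g) = ty_gamma.
Proof.
  intro H. apply typ_ga_inv in H. destruct H as [Hp _].
  pose proof (UA_plus_unb _ _ Hp) as Hu. apply typ_ga. split.
  - intro N. exists N. split; auto. destruct (LA_ex g g N (Hu N)) as [m Hm].
    exists m; split; auto. destruct Hm as [[x [Px [<- Hx]]] _]; auto.
  - intro N. destruct (Hu N) as [x [Px Hx]]. exists (g x); split; auto.
    destruct (LA_ex g g (g x)) as [m Hm]. eauto. exists m; split; auto.
    destruct Hm as [_ Hm]. apply (Hm x Px); auto.
Qed.

Lemma R2_al f g : (forall x, P x -> g x <= f x) -> typ (UA g f) = ty_alpha -> typ (LA f g) = ty_eps.
Proof.
  intros Hle H. apply typ_al_inv in H. destruct H as [_ Hb]. apply L_ep.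
  apply (UA_bound_val g f); auto.
Qed.

Lemma R2_ga f g : (forall x, P x -> g x <= f x) -> typ (UA g f) = ty_gamma -> typ (LA f g) = ty_gamma.
Proof.
  intros Hle H. apply typ_ga_inv in H. destruct H as [Hp _].
  assert (K1 : forall n, DomPlus (UA g f) n -> DomMinus (LA f g) n).
  { intros n [m [[[x [Px [Hx1 Hx2]]] _] Hnm]].
    destruct (LA_ex f g n) as [m' Hm']. exists x; split; auto; lia.
    exists m'; split; auto. destruct Hm' as [_ Hmin]. specialize (Hmin x Px). lia. }
  assert (K2 : forall n, DomMinus (LA f g) n -> DomPlus (LA f g) n).
  { intros n [m [Hm _]]. exists m; split; auto.
    destruct Hm as [[y [Py [<- Hy]]] _]. specialize (Hle y Py). lia. }
  apply typ_ga. split.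
  - exact (inf_mono _ _ (fun n H => K2 n (K1 n H)) Hp).
  - exact (inf_mono _ _ K1 Hp).
Qed.

Lemma R2_be f g : (forall x, P x -> g x <= f x) -> typ (UA g f) = ty_beta -> typ (LA f g) = ty_delta.
Proof.
  intros Hle H. apply typ_be_inv in H. destruct H as [HD [Hfin Hunb]].
  pose proof (UA_unb _ _ Hunb) as Hu. apply typ_de. split.
  - apply LA_dom_all; auto.
  - eapply fin_mono; [|exact Hfin].
    intros n [m [[[y [Py [Hy1 Hy2]]] _] Hmn]].
    pose proof (Hle y Py).
    destruct (UA_ex g f n) as [m'' Hm'']. exists y; split; auto; lia.
    exists n. intros z Pz Hz. specialize (Hle z Pz). lia.
    exists m''; split; auto. destruct Hm'' as [_ Hmax]. specialize (Hmax y Py). lia.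
Qed.

Lemma R3_ga f g c0 : (forall x, P x -> exists y, P y /\ g y = g x /\ f y <= c0) ->
  typ (UA g g) = ty_gamma -> typ (LA f g) = ty_alpha.
Proof.
  intros H3 H. apply typ_ga_inv in H. destruct H as [Hp _].
  pose proof (UA_plus_unb _ _ Hp) as Hu. apply typ_al. split.
  - apply LA_dom_all; auto.
  - exists c0. intros n m [[x [Px [_ Hx]]] Hmin].
    destruct (H3 x Px) as [y [Py [Hy1 Hy2]]]. specialize (Hmin y Py). lia.
Qed.

Lemma R4_bnd f g : typ (UA g g) = ty_gamma -> typ (UA f f) = ty_alpha -> typ (LA f g) = ty_alpha.
Proof.
  intros H1 H2. apply typ_ga_inv in H1. destruct H1 as [Hp _].
  pose proof (UA_plus_unb _ _ Hp) as Hu.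
  apply typ_al_inv in H2. destruct H2 as [_ Hb].
  destruct (UA_bound_val f f (fun x _ => le_n _) Hb) as [B HB].
  apply typ_al. split.
  - apply LA_dom_all; auto.
  - exists B. intros n m [[x [Px [<- _]]] _]. auto.
Qed.

Lemma R4_ep f g : typ (UA g g) = ty_gamma -> typ (UA g f) = ty_eps -> typ (LA f g) = ty_alpha.
Proof.
  intros H1 H2. apply typ_ga_inv in H1. destruct H1 as [Hp _].
  pose proof (UA_plus_unb _ _ Hp) as Hu.
  apply typ_ep_inv in H2. apply not_inf_iff in H2. destruct H2 as [N0 HN0].
  destruct (Hu 0) as [x0 [Px0 _]].
  set (n0 := N0 + f x0).
  assert (Cl : forall B, exists y, P y /\ f y <= n0 /\ B < g y).
  { intro B. apply NNPP; intro Hc. apply (HN0 n0); [unfold n0; lia|].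
    apply UA_ex. exists x0; split; auto; unfold n0; lia.
    exists B. intros y Py Hy. apply NNPP; intro Hgt. apply Hc. exists y.
    split; auto. split; auto. lia. }
  apply typ_al. split.
  - apply LA_dom_all; auto.
  - exists n0. intros n m [_ Hmin]. destruct (Cl n) as [y [Py [Hy1 Hy2]]].
    specialize (Hmin y Py). lia.
Qed.

Lemma R4_common f g : infinite_set (Dom (UA g f)) ->
  forall n, exists B, forall y, P y -> f y <= n -> g y <= B.
Proof.
  intros H n. destruct (H n) as [n' [Hn' [m [_ Hmax]]]]. exists m.
  intros y Py Hy. apply Hmax; auto. lia.
Qed.

Lemma LA_unb f g : (forall N, exists x, P x /\ N <= g x) ->
  (forall n, exists B, forall y, P y -> f y <= n -> g y <= B) -> ~ bounded_above (LA f g).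
Proof.
  intros Hu Hc [B HB]. destruct (Hc B) as [M HM].
  destruct (LA_ex f g (S M)) as [m Hm]. apply Hu.
  pose proof (HB _ _ Hm). destruct Hm as [[y [Py [Hy1 Hy2]]] _].
  specialize (HM y Py). lia.
Qed.

Lemma R4_ga f g : typ (UA g f) = ty_gamma -> typ (LA f g) = ty_gamma.
Proof.
  intros H. apply typ_ga_inv in H. destruct H as [Hp Hm].
  pose proof (UA_plus_unb _ _ Hp) as Hu. apply typ_ga. split.
  - intro N. destruct (Hm N) as [n [Hn [m [[_ Hmax] Hmn]]]].
    destruct (LA_ex f g (S n)) as [m' Hm']. apply Hu.
    exists (S n). split; [lia|]. exists m'. split; auto.
    destruct Hm' as [[y [Py [<- Hy]]] _].
    destruct (le_lt_dec (f y) n) as [Hle|Hlt]; [|lia].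
    specialize (Hmax y Py Hle). lia.
  - intro N. destruct (Hp N) as [n [Hn [m [[[x [Px [Hx1 Hx2]]] _] Hnm]]]].
    exists n. split; auto.
    destruct (LA_ex f g n) as [m' Hm']. exists x; split; auto; lia.
    exists m'. split; auto. destruct Hm' as [_ Hmin]. specialize (Hmin x Px). lia.
Qed.

Lemma R4_de f g : typ (UA g f) = ty_delta -> typ (LA f g) = ty_beta.
Proof.
  intros H. apply typ_de_inv in H. destruct H as [HD Hfin].
  apply not_inf_iff in Hfin. destruct Hfin as [N0 HN0].
  assert (Hp : infinite_set (DomPlus (UA g f))).
  { intro N. destruct (HD (N + N0)) as [n [Hn [m Hm]]].
    exists n. split; [lia|]. exists m. split; auto.
    destruct (le_lt_dec m n) as [Hle|]; [|lia].
    exfalso. apply (HN0 n); [lia|]. exists m; auto. }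
  pose proof (UA_plus_unb _ _ Hp) as Hu.
  pose proof (R4_common f g HD) as Hc.
  destruct (Hu 0) as [x0 [Px0 _]].
  apply typ_be. split; [|split].
  - apply LA_dom_all; auto.
  - apply not_inf_iff. exists (S (N0 + f x0)). intros n Hn [m [Hm Hnm]].
    destruct n as [|n']; [lia|].
    assert (K : forall y, P y -> f y <= n' -> g y <= n').
    { intros y Py Hy. destruct (le_lt_dec (g y) n') as [|Hlt]; auto.
      destruct Hm as [_ Hmin]. specialize (Hmin y Py). lia. }
    destruct (UA_ex g f n') as [m'' Hm'']. exists x0; split; auto; lia.
    exists n'. auto.
    apply (HN0 n'); [lia|]. exists m''. split; auto.
    destruct Hm'' as [[y [Py [<- Hy]]] _]. auto.
  - apply LA_unb; auto.
Qed.

End Abs.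
Arguments UA {X} P f g n m.
Arguments LA {X} P f g n m.
Section Val.
Variable F : Type.
Variable k : nat.
Variable psi : list F -> nat.
Hypothesis hk : 1 <= k.

Definition val (b : tag) (T : table F) : nat :=
  match excluded_middle_informative (exists v, psi_val k psi b T v) with
  | left h => proj1_sig (constructive_indefinite_description _ h)
  | right _ => 0
  end.

Lemma psi_val_ex b T : wf_table k T -> exists v, psi_val k psi b T v.
Proof.
  intros HT. destruct b; simpl.
  - eauto.
  - destruct (min_ex (fun v => exists G, tree_for k true T G /\ tree_cost psi G = v)
      (tree_cost psi [full F k (rows T) (attrs T) []])) as [m [Hm Hmin]].
    { eexists; split; [apply full_tree; auto|reflexivity]. }
    exists m. split; auto. intros G HG. apply Hmin. eauto.
  - destruct (min_ex (fun v => exists G, tree_for k false T G /\ tree_cost psi G = v)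
      (tree_cost psi [full F k (rows T) (attrs T) []])) as [m [Hm Hmin]].
    { eexists; split; [apply tree_relax, full_tree; auto|reflexivity]. }
    exists m. split; auto. intros G HG. apply Hmin. eauto.
Qed.

Lemma psi_val_uniq b T v w : psi_val k psi b T v -> psi_val k psi b T w -> v = w.
Proof.
  destruct b; simpl.
  - intros -> ->; auto.
  - intros [[G [HG <-]] Hm] [[G' [HG' <-]] Hm']. specialize (Hm G' HG'). specialize (Hm' G HG). lia.
  - intros [[G [HG <-]] Hm] [[G' [HG' <-]] Hm']. specialize (Hm G' HG'). specialize (Hm' G HG). lia.
Qed.

Lemma val_spec b T : wf_table k T -> psi_val k psi b T (val b T).
Proof.
  intros HT. unfold val. destruct excluded_middle_informative as [h|h].
  - destruct constructive_indefinite_description; simpl; auto.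
  - exfalso. apply h. apply psi_val_ex; auto.
Qed.

Lemma psi_val_iff b T v : wf_table k T -> (psi_val k psi b T v <-> v = val b T).
Proof.
  intros HT. split.
  - intros H. eapply psi_val_uniq; eauto. apply val_spec; auto.
  - intros ->. apply val_spec; auto.
Qed.

Lemma ord_di T : wf_table k T -> val td T <= val ti T.
Proof.
  intros HT. pose proof (val_spec ti T HT) as Hi. simpl in Hi.
  destruct (val_spec td T HT) as [_ Hm].
  pose proof (Hm _ (full_tree F k hk T HT)). pose proof (full_cost F k hk psi T). lia.
Qed.

Lemma ord_ad T : wf_table k T -> val ta T <= val td T.
Proof.
  intros HT. destruct (val_spec td T HT) as [[G [HG Hc]] _].
  destruct (val_spec ta T HT) as [_ Hm]. rewrite <- Hc. apply Hm. apply tree_relax; auto.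
Qed.

Definition t0 (T : table F) : table F :=
  mkTable (attrs T) (map (fun r => (fst r, [0])) (rows T)).

Lemma t0_wf T : wf_table k T -> wf_table k (t0 T).
Proof.
  intros (Hne & Hrows & Hnd & Hcol). unfold t0. split; [|split; [|split]]; simpl; auto.
  - intros r Hr. apply in_map_iff in Hr. destruct Hr as [r0 [<- Hr0]]. simpl.
    destruct (Hrows r0 Hr0) as [H1 [H2 _]]. split; auto. split; auto. discriminate.
  - rewrite map_map. simpl. exact Hnd.
  - intros i j f Hi Hj r Hr. apply in_map_iff in Hr. destruct Hr as [r0 [<- Hr0]]. simpl.
    eapply Hcol; eauto.
Qed.

Lemma t0_val T : wf_table k T ->
  val ti (t0 T) = val ti T /\ val td (t0 T) <= psi [] /\ val ta (t0 T) <= psi [].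
Proof.
  intros HT. pose proof (t0_wf T HT) as HT0.
  assert (Hd : val td (t0 T) <= psi []).
  { destruct (val_spec td (t0 T) HT0) as [_ Hm].
    assert (Htr : tree_for k true (t0 T) [Term F 0]).
    { apply term_tree. intros r Hr. simpl in Hr. apply in_map_iff in Hr.
      destruct Hr as [r0 [<- _]]. simpl; auto. }
    specialize (Hm _ Htr). unfold tree_cost in Hm. simpl in Hm. lia. }
  split; [|split; auto].
  - pose proof (val_spec ti T HT) as H1. pose proof (val_spec ti (t0 T) HT0) as H2.
    simpl in H1, H2. rewrite H1, H2. reflexivity.
  - pose proof (ord_ad _ HT0). lia.
Qed.

Lemma U_eq C b c : (forall T, C T -> wf_table k T) ->
  U_fun k C psi b c = UA C (val b) (val c).
Proof.
  intros HC. extensionality n. extensionality m. apply propositional_extensionality.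
  unfold U_fun, UA, upper_set. split.
  - intros [[T [HT [Hb [w [Hc Hw]]]]] Hmax].
    apply (psi_val_iff _ _ _ (HC T HT)) in Hb. apply (psi_val_iff _ _ _ (HC T HT)) in Hc.
    subst. split.
    + exists T. auto.
    + intros x Hx Hxc. apply Hmax. exists x. split; auto. split. apply val_spec; auto.
      exists (val c x). split; auto. apply val_spec; auto.
  - intros [[T [HT [Hb Hc]]] Hmax]. split.
    + exists T. split; auto. split. rewrite <- Hb. apply val_spec; auto.
      exists (val c T). split; auto. apply val_spec; auto.
    + intros v [x [Hx [Hxb [w [Hxc Hw]]]]].
      apply (psi_val_iff _ _ _ (HC x Hx)) in Hxb. apply (psi_val_iff _ _ _ (HC x Hx)) in Hxc.
      subst. apply Hmax; auto.
Qed.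

Lemma L_eq C b c : (forall T, C T -> wf_table k T) ->
  L_fun k C psi b c = LA C (val b) (val c).
Proof.
  intros HC. extensionality n. extensionality m. apply propositional_extensionality.
  unfold L_fun, LA, lower_set. split.
  - intros [[T [HT [Hb [w [Hc Hw]]]]] Hmin].
    apply (psi_val_iff _ _ _ (HC T HT)) in Hb. apply (psi_val_iff _ _ _ (HC T HT)) in Hc.
    subst. split.
    + exists T. auto.
    + intros x Hx Hxc. apply Hmin. exists x. split; auto. split. apply val_spec; auto.
      exists (val c x). split; auto. apply val_spec; auto.
  - intros [[T [HT [Hb Hc]]] Hmin]. split.
    + exists T. split; auto. split. rewrite <- Hb. apply val_spec; auto.
      exists (val c T). split; auto. apply val_spec; auto.
    + intros v [x [Hx [Hxb [w [Hxc Hw]]]]].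
      apply (psi_val_iff _ _ _ (HC x Hx)) in Hxb. apply (psi_val_iff _ _ _ (HC x Hx)) in Hxc.
      subst. apply Hmin; auto.
Qed.

End Val.

Lemma snd_T_tab j b c : snd (T_tab j b c) = t_tab j b c.
Proof.
  destruct j as [|[|[|[|[|[|[|[|j]]]]]]]]; destruct b, c; reflexivity.
Qed.

Ltac solveL :=
  first
  [ eapply L_ep_diag; eassumption
  | eapply R1_ga; eassumption
  | eapply R2_al; [eassumption|eassumption]
  | eapply R2_ga; [eassumption|eassumption]
  | eapply R2_be; [eassumption|eassumption]
  | eapply R3_ga; [eassumption|eassumption]
  | eapply R4_bnd; [eassumption|eassumption]
  | eapply R4_ep; [eassumption|eassumption]
  | eapply R4_ga; eassumption
  | eapply R4_de; eassumption ].

Theorem corollary3 (F : Type) (k : nat) (C : table F -> Prop) (psi : list F -> nat)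
  (j : nat) :
  inhabited F -> 2 <= k -> closed_class k C -> 1 <= j <= 7 ->
  ((forall b c, typ_u k C psi b c = t_tab j b c) <->
   (forall b c, typ_full k C psi b c = T_tab j b c)).
Proof.
  intros _ hk HC Hj. assert (hk1 : 1 <= k) by lia.
  pose proof (proj1 HC) as HW. split.
  - intros H.
    assert (H' : forall b c, typ (UA C (val F k psi b) (val F k psi c)) = t_tab j b c).
    { intros b c. rewrite <- (U_eq F k psi hk1 C b c HW). apply H. }
    clear H.
    assert (Odi : forall x, C x -> val F k psi td x <= val F k psi ti x).
    { intros; apply ord_di; auto. }
    assert (Oad : forall x, C x -> val F k psi ta x <= val F k psi td x).
    { intros; apply ord_ad; auto. }
    assert (Oai : forall x, C x -> val F k psi ta x <= val F k psi ti x).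
    { intros x Hx. pose proof (Odi x Hx). pose proof (Oad x Hx). lia. }
    assert (Rd : forall x, C x -> exists y, C y /\ val F k psi ti y = val F k psi ti x /\
                   val F k psi td y <= psi []).
    { intros x Hx. exists (t0 F x). pose proof (t0_val F k psi hk1 x (HW x Hx)) as [? [? ?]].
      split; [|auto]. eapply (proj2 HC); [exact Hx|]. apply op_change; auto.
      simpl. rewrite map_map. reflexivity. apply t0_wf; auto. }
    assert (Ra : forall x, C x -> exists y, C y /\ val F k psi ti y = val F k psi ti x /\
                   val F k psi ta y <= psi []).
    { intros x Hx. exists (t0 F x). pose proof (t0_val F k psi hk1 x (HW x Hx)) as [? [? ?]].
      split; [|auto]. eapply (proj2 HC); [exact Hx|]. apply op_change; auto.
      simpl. rewrite map_map. reflexivity. apply t0_wf; auto. }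
    pose proof (H' ti ti) as Hii. pose proof (H' ti td) as Hid. pose proof (H' ti ta) as Hia.
    pose proof (H' td ti) as Hdi. pose proof (H' td td) as Hdd. pose proof (H' td ta) as Hda.
    pose proof (H' ta ti) as Hai. pose proof (H' ta td) as Had. pose proof (H' ta ta) as Haa.
    intros b c. unfold typ_full. rewrite (L_eq F k psi hk1 C b c HW), (U_eq F k psi hk1 C b c HW), H'.
    destruct Hj as [Hj1 Hj2].
    destruct j as [|[|[|[|[|[|[|[|j]]]]]]]]; try lia;
      cbv [t_tab sel] in Hii, Hid, Hia, Hdi, Hdd, Hda, Hai, Had, Haa;
      destruct b, c; cbv [T_tab t_tab sel]; f_equal; solveL.
  - intros H b c. specialize (H b c). unfold typ_full in H. unfold typ_u.
    apply (f_equal snd) in H. simpl in H. rewrite H. apply snd_T_tab.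
Qed.
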